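(* Let $G$ be a graph on $n$ vertices, let $k,s$ be positive integers, let $J$ be a $(k,k)$-bigraph, and let $X,Y\subseteq V(G)$ be such that $G[X]$ is $J$-free and $Y$ is $(k,s)$-unrestricted. Then $\min\{|X\setminus Y|,|X\cap Y|\}\le ks$.
   Context: Graphs are finite and simple. A $(k_1,k_2)$-bigraph is a triple $J=(H,A,B)$ with $H$ bipartite with bipartition $(A,B)$, $|A|=k_1$, $|B|=k_2$. An embedding of $J$ into a graph $G$ is an injection $\eta:A\cup B\to V(G)$ such that for all $u\in A$, $v\in B$: $uv\in E(H)$ iff $\eta(u)\eta(v)\in E(G)$; $G$ is $J$-free if no embedding exists. An ordered bigraph is a bigraph with $A$ and $B$ linearly ordered. For disjoint ordered sets $A=(a_1,\dots,a_{k_1})$, $B=(b_1,\dots,b_{k_2})$ of vertices of $G$, $(A,B)$ induces the ordered bigraph $J'$ if $a_ib_j\in E(G)$ exactly when the $i$-th vertex of the first side of $J'$ is adjacent to the $j$-th vertex of its second side. A $k$-base on a set $X$ is a collection of pairwise disjoint ordered $k$-element subsets of $X$. For a $k_1$-base $\mathcal{A}$ and a $k_2$-base $\mathcal{B}$ (on vertex sets of $G$), $(\mathcal{A},\mathcal{B})$ induces $J'$ if some $A\in\mathcal{A}$, $B\in\mathcal{B}$ induce $J'$, is $J'$-free otherwise, and is restricted if it is $J'$-free for some ordered $(k_1,k_2)$-bigraph $J'$. A set $Y\subseteq V(G)$ is $(k,s)$-restricted if there exist a $k$-base $\mathcal{A}$ on $Y$ and a $k$-base $\mathcal{B}$ on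 $V(G)\setminus Y$ with $|\mathcal{A}|,|\mathcal{B}|\ge s$ and $(\mathcal{A},\mathcal{B})$ restricted; otherwise $Y$ is $(k,s)$-unrestricted. *)

(* Defs.v *)
From mathcomp Require Import all_boot.
Set Implicit Arguments. Unset Strict Implicit. Unset Printing Implicit Defensive.

Definition simple_graph (T : finType) (e : rel T) : Prop :=
  symmetric e /\ irreflexive e.

(* A (k1,k2)-bigraph J = (H, A, B): we take A = 'I_k1, B = 'I_k2 and record
   only the edges between A and B (H is bipartite with bipartition (A,B)).
   An ordered (k1,k2)-bigraph is the same data, with the orders on A, B
   being those of 'I_k1, 'I_k2. *)
Definition bigraph (k1 k2 : nat) := 'I_k1 -> 'I_k2 -> bool.

Definition embeds_in (T : finType) (e : rel T) (k1 k2 : nat)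
  (J : bigraph k1 k2) (X : {set T}) : Prop :=
  exists eta : 'I_k1 + 'I_k2 -> T,
    injective eta /\ (forall z, eta z \in X) /\
    (forall (u : 'I_k1) (v : 'I_k2), e (eta (inl u)) (eta (inr v)) = J u v).

Definition induced_free (T : finType) (e : rel T) (k1 k2 : nat)
  (J : bigraph k1 k2) (X : {set T}) : Prop :=
  ~ embeds_in e J X.

(* A k-base with m members on X: a family (f i)_{i < m} of ordered k-element
   subsets (f i 0, ..., f i (k-1)) of X, pairwise disjoint; encoded as
   f : 'I_m -> 'I_k -> T with (i,a) |-> f i a injective (so each ordered set
   has k distinct elements and distinct members are disjoint). For k >= 1
   the members are then distinct, so the base has exactly m members. *)
Definition is_base (T : finType) (k m : nat) (f : 'I_m -> 'I_k -> T)
  (X : {set T}) : Prop :=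
  (forall i i' a a', f i a = f i' a' -> i = i' /\ a = a') /\
  (forall i a, f i a \in X).

Definition base_induces (T : finType) (e : rel T) (k1 k2 m1 m2 : nat)
  (fA : 'I_m1 -> 'I_k1 -> T) (fB : 'I_m2 -> 'I_k2 -> T)
  (J' : bigraph k1 k2) : Prop :=
  exists (i : 'I_m1) (j : 'I_m2),
    forall (a : 'I_k1) (b : 'I_k2), e (fA i a) (fB j b) = J' a b.

Definition base_restricted (T : finType) (e : rel T) (k1 k2 m1 m2 : nat)
  (fA : 'I_m1 -> 'I_k1 -> T) (fB : 'I_m2 -> 'I_k2 -> T) : Prop :=
  exists J' : bigraph k1 k2, ~ base_induces e fA fB J'.

Definition ks_restricted (T : finType) (e : rel T) (k s : nat)
  (Y : {set T}) : Prop :=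
  exists (m1 m2 : nat) (fA : 'I_m1 -> 'I_k -> T) (fB : 'I_m2 -> 'I_k -> T),
    [/\ is_base fA Y, is_base fB (~: Y), s <= m1, s <= m2
      & base_restricted e fA fB].

Definition ks_unrestricted (T : finType) (e : rel T) (k s : nat)
  (Y : {set T}) : Prop :=
  ~ ks_restricted e k s Y.

(* Main.v *)
Require Import Defs.
From mathcomp Require Import all_boot.
From mathcomp Require Import zify.

Lemma base_of (T : finType) (Z : {set T}) (k s : nat) :
  0 < k -> 0 < s -> k * s <= #|Z| ->
  exists f : 'I_s -> 'I_k -> T, is_base f Z.
Proof.
move=> k0 s0 hZ.
have [x0 _] : exists x, x \in Z.
  apply/set0Pn; rewrite -card_gt0; apply: leq_trans hZ; by rewrite muln_gt0 k0 s0.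
have sz : size (enum Z) = #|Z| by rewrite cardE.
have bnd : forall (i : 'I_s) (a : 'I_k), i * k + a < size (enum Z).
  move=> i a; rewrite sz; apply: leq_trans hZ.
  have := ltn_ord i; have := ltn_ord a; nia.
exists (fun i a => nth x0 (enum Z) (i * k + a)); split.
- move=> i i' a a' /eqP; rewrite nth_uniq ?enum_uniq ?bnd // => /eqP H.
  have Hd : (i * k + a) %/ k = (i' * k + a') %/ k by rewrite H.
  have Hm : (i * k + a) %% k = (i' * k + a') %% k by rewrite H.
  rewrite !divnMDl // !divn_small ?addn0 in Hd; try exact: ltn_ord.
  rewrite !modnMDl !modn_small in Hm; try exact: ltn_ord.
  by split; apply: val_inj.
- by move=> i a; rewrite -mem_enum mem_nth ?bnd.
Qed.

Theorem lemma3p10 (T : finType) (e : rel T) (k s : nat) (J : bigraph k k)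
  (X Y : {set T}) :
  simple_graph e -> 0 < k -> 0 < s ->
  induced_free e J X -> ks_unrestricted e k s Y ->
  minn #|X :\: Y| #|X :&: Y| <= k * s.
Proof.
move=> _ k0 s0 hfree hunr.
rewrite leqNgt; apply/negP; rewrite leq_min => /andP [h1 h2].
have [fB [fBi fBm]] := @base_of T _ k s k0 s0 (ltnW h1).
have [fA [fAi fAm]] := @base_of T _ k s k0 s0 (ltnW h2).
apply: hunr; exists s, s, fA, fB; split => //.
- by split => // i a; move: (fAm i a); rewrite inE => /andP [].
- by split => // i a; move: (fBm i a); rewrite !inE => /andP [].
exists J => -[i [j hij]].
apply: hfree.
exists (fun z => match z with inl a => fA i a | inr b => fB j b end).
split; [|split].
- move=> [a|b] [a'|b'] /= H.
  + by have [_ ->] := fAi _ _ _ _ H.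
  + by move: (fAm i a) (fBm j b'); rewrite H !inE => /andP [_ ->] /andP [].
  + by move: (fBm j b) (fAm i a'); rewrite H !inE => /andP [/negbTE -> _] /andP [].
  + by have [_ ->] := fBi _ _ _ _ H.
- move=> [a|b].
  + by move: (fAm i a); rewrite inE => /andP [].
  + by move: (fBm j b); rewrite !inE => /andP [].
- by move=> u v; exact: hij.
Qed.
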